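(* For all integers $n\ge2$, $$B_R(n):=\sum_{1<p\le\sqrt n}\frac{n-1}{p-1}d_p(n)\log p\le 4\,n^{3/2},$$ where the sum is over primes $p\le\sqrt n$.
   Context: For a prime $p$, $d_p(n)$ is the sum of the base-$p$ digits of the integer $n$. *)

(* Defs.v *)
From Stdlib Require Import Reals Arith Lia ZArith Znumtheory.
Open Scope R_scope.

(* Sum of base-p digits of n, computed with fuel (fuel = n suffices for p >= 2). *)
Fixpoint digit_sum_aux (fuel p n : nat) : nat :=
  match fuel with
  | O => O
  | S f => match n with
           | O => O
           | _ => (n mod p + digit_sum_aux f p (n / p))%nat
           end
  end.

Definition digit_sum (p n : nat) : nat := digit_sum_aux n p n.

Definition is_prime (p : nat) : Prop := prime (Z.of_nat p).

(* B_R(n) = sum over primes p with p <= sqrt n of (n-1)/(p-1) * d_p(n) * log p.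
   For integer p, p <= sqrt n  <->  p*p <= n. *)
Definition B_R_term (n p : nat) : R :=
  if (Z.of_nat p * Z.of_nat p <=? Z.of_nat n)%Z then
    if prime_dec (Z.of_nat p) then
      (INR n - 1) / (INR p - 1) * INR (digit_sum p n) * ln (INR p)
    else 0
  else 0.

(* Sum over p = 0 .. n (all primes p <= sqrt n are <= n). *)
Definition B_R (n : nat) : R := sum_f_R0 (B_R_term n) n.

(* Main.v *)
Require Import Defs.
From Stdlib Require Import Reals.
From Stdlib Require Import ZArith Lia Lra Psatz List.
From Stdlib Require Znumtheory.

Fixpoint prim (t : nat) : nat :=
  match t with
  | O => 1%nat
  | S t' => ((if Znumtheory.prime_dec (Z.of_nat (S t')) then S t' else 1) * prim t')%nat
  end.

Module NTh.
From mathcomp Require Import ssreflect ssrfun ssrbool eqtype ssrnat div prime bigop binomial.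
From mathcomp Require Import zify.
Local Open Scope nat_scope.
Lemma dvd_bridge d p : (d %| p) <-> (Z.of_nat d | Z.of_nat p)%Z.
Proof.
split => h.
- case/dvdnP: h => k ->. exists (Z.of_nat k). lia.
- case: h => k hk.
  case: (posnP d) => hd.
    subst d. have -> : p = 0 by lia. by [].
  apply/dvdnP; exists (Z.to_nat k); nia.
Qed.

Lemma prime_bridge p : prime p <-> Znumtheory.prime (Z.of_nat p).
Proof.
rewrite -Znumtheory.prime_alt /Znumtheory.prime'; split.
- case/primeP => h1 h2; split; first lia.
  move=> n hn hdiv.
  have hn' : n = Z.of_nat (Z.to_nat n) by lia.
  rewrite hn' in hdiv.
  move/dvd_bridge: hdiv => /h2 /orP [] /eqP; lia.
- case=> h1 h2; apply/primeP; split; first lia.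
  move=> d hd.
  have hdp : d <= p by apply: dvdn_leq; lia.
  have hd0 : 0 < d by case: (posnP d) hd => // ->; rewrite dvd0n; lia.
  apply/orP.
  case: (ltngtP d 1) => hd1; first lia. 
    case: (ltngtP d p) => hdp2.
      exfalso; apply: (h2 (Z.of_nat d)); first lia. by apply/dvd_bridge.
    lia.
    by right; apply/eqP.
  by left; apply/eqP.
Qed.

Definition primorial t := \prod_(0 <= p < t.+1 | prime p) p.

Lemma prime_dvd_fact_le p m : prime p -> p %| m`! -> p <= m.
Proof.
move=> pp; elim: m => [|m IH]; first by rewrite fact0 dvdn1 => /eqP h; rewrite h in pp.
rewrite factS Euclid_dvdM // => /orP [h|h].
  by apply: dvdn_leq.
by apply: leqW; apply: IH.
Qed.

Lemma prod_primes_dvd a b N :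
  (forall p, prime p -> a <= p < b -> p %| N) ->
  \prod_(a <= p < b | prime p) p %| N.
Proof.
elim: b => [|b IH] H; first by rewrite big_geq.
case: (leqP a b) => hab; last first.
  by rewrite big_geq.
rewrite big_mkcond big_nat_recr //= -big_mkcond.
case pb: (prime b); last first.
  by rewrite muln1; apply: IH => p pp /andP[h1 h2]; apply: H => //; rewrite h1 /=; lia.
rewrite Gauss_dvd.
  apply/andP; split.
    by apply: IH => p pp /andP[h1 h2]; apply: H => //; rewrite h1 /=; lia.
  by apply: H => //; rewrite hab /=.
rewrite coprime_sym prime_coprime //.
apply/negP; rewrite big_nat_cond Euclid_dvd_prod //.
elim/big_rec: _ => // i x /andP[/andP[h1 h2] pi] hx.
move/orP => [h|h]; last by apply: hx.
rewrite dvdn_prime2 // in h.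
move/eqP: h => h; subst; lia.
Qed.

Lemma bin_central k : 'C(k.*2.+1, k) <= 4 ^ k.
Proof.
elim: k => [|k IH]; first by [].
have a := mul_bin_diag (k.*2.+3) k.
have b := mul_bin_diag (k.*2.+2) k.
have c := mul_bin_left (k.*2.+2) k.
have e : (k.+1).*2.+1 = k.*2.+3 by rewrite doubleS.
rewrite e expnS.
simpl in a, b, c.
have hk : k.*2.+2 - k = k.+2 by lia.
rewrite hk in c.
nia.
Qed.


Lemma prime_dvd_bin_central k p : prime p -> k.+2 <= p < k.*2.+2 -> p %| 'C(k.*2.+1, k).
Proof.
move=> pp /andP[h1 h2].
have hf' : 'C(k.*2.+1, k) * (k`! * (k.*2.+1 - k)`!) = (k.*2.+1)`!.
  apply: bin_fact; lia.
have hd : p %| (k.*2.+1)`! by apply: dvdn_fact; apply/andP; split; [apply: prime_gt0|lia].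
rewrite -hf' Euclid_dvdM // in hd.
case/orP: hd => // hd.
rewrite Euclid_dvdM // in hd.
case/orP: hd => hd; have := prime_dvd_fact_le _ _ pp hd; lia.
Qed.

Lemma primorial_small t : t <= 2 -> primorial t <= 4 ^ t.-1.
Proof.
by case: t => [|[|[|t]]] // _; rewrite /primorial unlock /=.
Qed.

Lemma primorial_bound t : primorial t <= 4 ^ t.-1.
Proof.
elim: t {-2}t (leqnn t) => [|n IH] t ht.
  have e : t = 0 by lia.
  by rewrite e; apply: primorial_small.
case: (leqP t 2) => ht2; first exact: primorial_small.
have := odd_double_half t.
set k := t./2.
case: (odd t) => /= et.
  have hk1 : 1 <= k by lia.
  rewrite /primorial -et.
  rewrite (@big_cat_nat _ _ _ k.+2) //=; last by lia.
  have IH1 : \prod_(0 <= p < k.+2 | prime p) p <= 4 ^ k.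
    have := IH k.+1 ltac:(lia). by [].
  have hQ : \prod_(k.+2 <= p < k.*2.+2 | prime p) p <= 4 ^ k.
    apply: leq_trans (bin_central k).
    apply: dvdn_leq; first by rewrite bin_gt0; lia.
    apply: prod_primes_dvd => p pp hp; exact: prime_dvd_bin_central.
  apply: leq_trans (leq_mul IH1 hQ) _. by rewrite -expnD addnn.
have hk1 : 2 <= k by lia.
have IH1 := IH t.-1 ltac:(lia).
rewrite /primorial.
have -> : t.+1 = (t.-1).+2 by lia.
rewrite big_mkcond big_nat_recr //= -big_mkcond.
have np : prime t.-1.+1 = false.
  apply/negP => pt.
  have h2 : 2 %| t.-1.+1 by rewrite (ltn_predK ht2) -et add0n dvdn2 odd_double.
  rewrite dvdn_prime2 // in h2. move/eqP: h2; lia.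
rewrite np muln1.
apply: leq_trans IH1 _.
rewrite leq_exp2l //; lia.
Qed.


Lemma prim_eq t : prim t = primorial t.
Proof.
elim: t => [|t IH]; first by rewrite /primorial unlock.
rewrite /primorial big_mkcond big_nat_recr //= -big_mkcond -/(primorial t) -IH.
case: Znumtheory.prime_dec => h.
  have -> : prime t.+1 by apply/prime_bridge.
  by rewrite mulnC.
have -> : prime t.+1 = false by apply/negP => /prime_bridge.
rewrite muln1 /=; lia.
Qed.

Lemma expn_pow a b : Nat.pow a b = expn a b.
Proof. elim: b => [|b IH] //=; by rewrite expnS IH. Qed.

Lemma prim_bound t : (prim t <= Nat.pow 4 (Nat.pred t))%coq_nat.
Proof.
apply/leP; rewrite prim_eq expn_pow.
exact: primorial_bound.
Qed.
End NTh.


Import ListNotations.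
Open Scope R_scope.

Open Scope R_scope.

Fixpoint nd_aux (fuel p n : nat) : nat :=
  match fuel with
  | O => O
  | S f => match n with
           | O => O
           | _ => S (nd_aux f p (n / p))
           end
  end.
Definition nd (p n : nat) : nat := nd_aux n p n.

Lemma div_lt_self p n : (2 <= p)%nat -> (0 < n)%nat -> (n / p < n)%nat.
Proof. intros; apply Nat.div_lt; lia. Qed.

Lemma ds_aux_fuel p : (2 <= p)%nat -> forall f1 f2 n, (n <= f1)%nat -> (n <= f2)%nat ->
  digit_sum_aux f1 p n = digit_sum_aux f2 p n.
Proof.
  intros hp f1; induction f1 as [|f1 IH]; intros f2 n h1 h2.
  - assert (n = 0%nat) by lia; subst. destruct f2; reflexivity.
  - destruct f2 as [|f2]; [assert (n = 0%nat) by lia; subst; reflexivity|].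
    destruct n as [|n']; [reflexivity|].
    simpl. f_equal. apply IH.
    + pose proof (div_lt_self p (S n') hp ltac:(lia)). lia.
    + pose proof (div_lt_self p (S n') hp ltac:(lia)). lia.
Qed.

Lemma ds_eq p n : (2 <= p)%nat -> digit_sum p n = (n mod p + digit_sum p (n / p))%nat.
Proof.
  intros hp. destruct n as [|n'].
  - unfold digit_sum; simpl. rewrite Nat.mod_0_l by lia. rewrite Nat.div_0_l by lia. reflexivity.
  - unfold digit_sum at 1. simpl digit_sum_aux. f_equal.
    unfold digit_sum. apply ds_aux_fuel; auto.
    pose proof (div_lt_self p (S n') hp ltac:(lia)). lia.
Qed.

Lemma ds_zero p : digit_sum p 0 = 0%nat.
Proof. reflexivity. Qed.

Lemma nd_aux_fuel p : (2 <= p)%nat -> forall f1 f2 n, (n <= f1)%nat -> (n <= f2)%nat ->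
  nd_aux f1 p n = nd_aux f2 p n.
Proof.
  intros hp f1; induction f1 as [|f1 IH]; intros f2 n h1 h2.
  - assert (n = 0%nat) by lia; subst. destruct f2; reflexivity.
  - destruct f2 as [|f2]; [assert (n = 0%nat) by lia; subst; reflexivity|].
    destruct n as [|n']; [reflexivity|].
    simpl. f_equal. apply IH.
    + pose proof (div_lt_self p (S n') hp ltac:(lia)). lia.
    + pose proof (div_lt_self p (S n') hp ltac:(lia)). lia.
Qed.

Lemma nd_eq p n : (2 <= p)%nat -> (0 < n)%nat -> nd p n = S (nd p (n / p)).
Proof.
  intros hp hn. destruct n as [|n']; [lia|].
  unfold nd at 1. simpl nd_aux. f_equal.
  unfold nd. apply nd_aux_fuel; auto.
  pose proof (div_lt_self p (S n') hp ltac:(lia)). lia.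
Qed.

Lemma nd_zero p : nd p 0 = 0%nat.
Proof. reflexivity. Qed.

Lemma strong_ind (P : nat -> Prop) : (forall n, (forall m, (m < n)%nat -> P m) -> P n) -> forall n, P n.
Proof.
  intros H n. assert (forall k m, (m <= k)%nat -> P m) as G.
  { induction k; intros m hm. - apply H; intros; lia. - apply H; intros; apply IHk; lia. }
  apply (G n); lia.
Qed.

Lemma ds_le_n p n : (2 <= p)%nat -> (digit_sum p n <= n)%nat.
Proof.
  intros hp. induction n as [n IH] using strong_ind.
  destruct (Nat.eq_dec n 0) as [->|hn]; [reflexivity|].
  rewrite ds_eq by auto.
  pose proof (IH (n / p)%nat (div_lt_self p n hp ltac:(lia))).
  pose proof (Nat.div_mod n p ltac:(lia)).
  assert (n / p <= p * (n / p))%nat. { destruct p as [|p']; [lia|]. simpl. lia. } lia.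
Qed.

Lemma ds_le_nd p n : (2 <= p)%nat -> (digit_sum p n <= (p - 1) * nd p n)%nat.
Proof.
  intros hp. induction n as [n IH] using strong_ind.
  destruct (Nat.eq_dec n 0) as [->|hn]; [rewrite ds_zero, nd_zero; lia|].
  rewrite ds_eq by auto. rewrite nd_eq by lia.
  pose proof (IH (n / p)%nat (div_lt_self p n hp ltac:(lia))).
  pose proof (Nat.mod_upper_bound n p ltac:(lia)).
  rewrite Nat.mul_succ_r. lia.
Qed.

Lemma ds_le_two p n : (2 <= p)%nat -> (digit_sum p n <= 2 * (p - 1) + n / (p * p))%nat.
Proof.
  intros hp. rewrite ds_eq by auto. rewrite (ds_eq p (n / p)) by auto.
  pose proof (ds_le_n p (n / p / p) hp).
  rewrite Nat.div_div in * by lia.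
  pose proof (Nat.mod_upper_bound n p ltac:(lia)).
  pose proof (Nat.mod_upper_bound (n / p) p ltac:(lia)). lia.
Qed.

Lemma nd_le_k p : (2 <= p)%nat -> forall k n, (n < p ^ k)%nat -> (nd p n <= k)%nat.
Proof.
  intros hp k. induction k as [|k IH]; intros n hn.
  - simpl in hn. assert (n = 0%nat) by lia. subst. reflexivity.
  - destruct (Nat.eq_dec n 0) as [->|hn0]; [rewrite nd_zero; lia|].
    rewrite nd_eq by lia. apply le_n_S. apply IH.
    apply Nat.div_lt_upper_bound; [lia|]. simpl in hn. lia.
Qed.

Lemma nd_pow p n : (2 <= p)%nat -> (n < p ^ nd p n)%nat.
Proof.
  intros hp. induction n as [n IH] using strong_ind.
  destruct (Nat.eq_dec n 0) as [->|hn0]; [simpl; lia|].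
  rewrite nd_eq by lia. simpl.
  pose proof (IH (n / p)%nat (div_lt_self p n hp ltac:(lia))).
  pose proof (Nat.div_mod n p ltac:(lia)).
  pose proof (Nat.mod_upper_bound n p ltac:(lia)). nia.
Qed.

Lemma nd_mono_base p q n : (2 <= p)%nat -> (p <= q)%nat -> (nd q n <= nd p n)%nat.
Proof.
  intros hp hq. apply nd_le_k; [lia|].
  pose proof (nd_pow p n hp).
  pose proof (Nat.pow_le_mono_l p q (nd p n) hq). lia.
Qed.

Lemma nd_mono_n p n n' : (2 <= p)%nat -> (n <= n')%nat -> (nd p n <= nd p n')%nat.
Proof.
  intros hp hn. apply nd_le_k; auto.
  pose proof (nd_pow p n' hp). lia.
Qed.

Open Scope R_scope.

Definition ap (p : nat) : R := if Znumtheory.prime_dec (Z.of_nat p) then ln (INR p) else 0.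
Definition hn (n j : nat) : R := Rmin (INR (nd j n)) (2 + INR (n / (j * j)) / INR (j - 1)).
Definition hh (n j : nat) : R := if (j * j <=? n)%nat then hn n j else 0.
Definition cc (n j : nat) : R := if (j <? 2)%nat then 0 else hh n j.

Lemma ln_le' x y : 0 < x -> x <= y -> ln x <= ln y.
Proof. intros hx hxy. destruct (Rle_lt_or_eq_dec x y hxy) as [h|h].
  - left; apply ln_increasing; auto. - subst; lra. Qed.

Lemma Rmin_mono a b a' b' : a <= a' -> b <= b' -> Rmin a b <= Rmin a' b'.
Proof. intros; unfold Rmin; destruct (Rle_dec a b); destruct (Rle_dec a' b'); lra. Qed.

Lemma div_nonneg x y : 0 <= x -> 0 <= y -> 0 <= x / y.
Proof.
  intros hx hy. destruct (Req_dec y 0) as [->|hy0].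
  - unfold Rdiv; rewrite Rinv_0; lra.
  - apply Rmult_le_pos; auto. left; apply Rinv_0_lt_compat; lra.
Qed.

Lemma hn_nonneg n j : 0 <= hn n j.
Proof.
  unfold hn. apply Rmin_glb. apply pos_INR.
  pose proof (div_nonneg (INR (n / (j*j))) (INR (j-1)) (pos_INR _) (pos_INR _)). lra.
Qed.

Lemma hh_nonneg n j : 0 <= hh n j.
Proof. unfold hh. destruct (j * j <=? n)%nat. apply hn_nonneg. lra. Qed.

Lemma cc_nonneg n j : 0 <= cc n j.
Proof. unfold cc. destruct (j <? 2)%nat. lra. apply hh_nonneg. Qed.

Lemma hn_mono n j : (2 <= j)%nat -> hn n (S j) <= hn n j.
Proof.
  intros hj. unfold hn. apply Rmin_mono.
  - apply le_INR. apply nd_mono_base; lia.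
  - apply Rplus_le_compat_l.
    assert (h1 : (n / (S j * S j) <= n / (j * j))%nat) by (apply Nat.div_le_compat_l; nia).
    apply le_INR in h1.
    assert (h2 : INR (j - 1) <= INR (S j - 1)) by (apply le_INR; lia).
    assert (h3 : 0 < INR (j - 1)) by (apply lt_0_INR; lia).
    pose proof (pos_INR (n / (S j * S j))).
    unfold Rdiv. apply Rmult_le_compat; auto.
    + left; apply Rinv_0_lt_compat; lra.
    + apply Rinv_le_contravar; auto.
Qed.

Lemma hh_mono n j : (2 <= j)%nat -> hh n (S j) <= hh n j.
Proof.
  intros hj. unfold hh.
  destruct (S j * S j <=? n)%nat eqn:E1.
  - apply Nat.leb_le in E1. assert (E2 : (j * j <=? n)%nat = true) by (apply Nat.leb_le; nia).
    rewrite E2. apply hn_mono; auto.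
  - destruct (j * j <=? n)%nat. apply hn_nonneg. lra.
Qed.

Lemma hn_mono_n n n' j : (2 <= j)%nat -> (n <= n')%nat -> hn n j <= hn n' j.
Proof.
  intros hj hn'. unfold hn. apply Rmin_mono.
  - apply le_INR, nd_mono_n; lia.
  - apply Rplus_le_compat_l. unfold Rdiv. apply Rmult_le_compat_r.
    + left; apply Rinv_0_lt_compat; apply lt_0_INR; lia.
    + apply le_INR, Nat.div_le_mono; nia.
Qed.

Lemma cc_mono_n n n' j : (n <= n')%nat -> cc n j <= cc n' j.
Proof.
  intros h. unfold cc. destruct (j <? 2)%nat eqn:E; [lra|].
  apply Nat.ltb_ge in E. unfold hh.
  destruct (j * j <=? n)%nat eqn:E1.
  - apply Nat.leb_le in E1. assert (E2 : (j * j <=? n')%nat = true) by (apply Nat.leb_le; lia).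
    rewrite E2. apply hn_mono_n; auto.
  - destruct (j * j <=? n')%nat. apply hn_nonneg. lra.
Qed.

Lemma term_bound n p : (2 <= n)%nat -> B_R_term n p <= (INR n - 1) * (ap p * hh n p).
Proof.
  intros hn2. assert (hn1 : 1 <= INR n) by (apply (le_INR 1); lia).
  unfold B_R_term, ap, hh.
  destruct (Z.of_nat p * Z.of_nat p <=? Z.of_nat n)%Z eqn:E.
  - apply Z.leb_le in E. assert (E' : (p * p <=? n)%nat = true) by (apply Nat.leb_le; lia).
    rewrite E'.
    destruct (Znumtheory.prime_dec (Z.of_nat p)) as [hp|hp].
    + pose proof (Znumtheory.prime_ge_2 _ hp) as hp2. assert (hp2' : (2 <= p)%nat) by lia.
      assert (hp1 : INR p - 1 = INR (p - 1)) by (rewrite minus_INR by lia; simpl; lra).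
      assert (hpos : 0 < INR (p - 1)) by (apply lt_0_INR; lia).
      assert (hlnp : 0 <= ln (INR p)) by (rewrite <- ln_1; apply ln_le'; [lra| apply (le_INR 1); lia]).
      rewrite hp1.
      assert (key : INR (digit_sum p n) / INR (p - 1) <= hn n p).
      { unfold hn. apply Rmin_glb.
        - pose proof (ds_le_nd p n hp2') as h. apply le_INR in h. rewrite mult_INR in h.
          apply (Rmult_le_reg_r (INR (p-1))); auto. unfold Rdiv. rewrite Rmult_assoc, Rinv_l by lra. lra.
        - pose proof (ds_le_two p n hp2') as h. apply le_INR in h. rewrite plus_INR, mult_INR in h.
          apply (Rmult_le_reg_r (INR (p-1))); auto. unfold Rdiv.
          rewrite Rmult_assoc, Rinv_l by lra. rewrite Rmult_plus_distr_r, Rmult_assoc, Rinv_l by lra.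
          simpl in h. lra. }
      assert (e : (INR n - 1) / INR (p - 1) * INR (digit_sum p n) * ln (INR p)
                  = (INR n - 1) * (ln (INR p) * (INR (digit_sum p n) / INR (p - 1)))) by (field; lra).
      rewrite e. apply Rmult_le_compat_l; [lra|]. apply Rmult_le_compat_l; auto.
    + lra.
  - destruct (Znumtheory.prime_dec (Z.of_nat p)).
    + destruct (p * p <=? n)%nat eqn:E'.
      * apply Nat.leb_le in E'. apply Z.leb_gt in E. lia.
      * lra.
    + lra.
Qed.

Lemma ap_nonneg p : 0 <= ap p.
Proof.
  unfold ap. destruct (Znumtheory.prime_dec (Z.of_nat p)) as [hp|]; [|lra].
  pose proof (Znumtheory.prime_ge_2 _ hp).
  rewrite <- ln_1; apply ln_le'; [lra|]. apply (le_INR 1); lia.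
Qed.

Lemma ap_01 p : (p < 2)%nat -> ap p = 0.
Proof.
  intros h. unfold ap. destruct (Znumtheory.prime_dec (Z.of_nat p)) as [hp|]; [|lra].
  pose proof (Znumtheory.prime_ge_2 _ hp). lia.
Qed.

Lemma prim_pos t : (0 < prim t)%nat.
Proof. induction t; simpl. lia. destruct (Znumtheory.prime_dec _); lia. Qed.

Lemma theta_eq t : sum_f_R0 ap t = ln (INR (prim t)).
Proof.
  induction t as [|t IH].
  - simpl. rewrite ap_01 by lia. rewrite ln_1; reflexivity.
  - change (sum_f_R0 ap (S t)) with (sum_f_R0 ap t + ap (S t)). rewrite IH. cbn [prim]. unfold ap.
    pose proof (prim_pos t).
    destruct (Znumtheory.prime_dec (Z.of_nat (S t))).
    + rewrite mult_INR, ln_mult; [lra| apply lt_0_INR; lia | apply lt_0_INR; lia].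
    + rewrite Nat.mul_1_l. lra.
Qed.

Lemma theta_le t : sum_f_R0 ap t <= INR (Nat.pred t) * ln 4.
Proof.
  rewrite theta_eq. pose proof (NTh.prim_bound t) as h.
  apply le_INR in h. rewrite pow_INR in h.
  pose proof (prim_pos t).
  apply Rle_trans with (ln ((INR 4) ^ (Nat.pred t))).
  - apply ln_le'; auto. apply lt_0_INR; lia.
  - replace (INR 4) with 4 by (simpl; lra). rewrite ln_pow by lra. lra.
Qed.

Lemma abel (g : nat -> R) :
  (forall j, (2 <= j)%nat -> g (S j) <= g j) -> (forall j, (2 <= j)%nat -> 0 <= g j) ->
  forall t, sum_f_R0 (fun p => ap p * g p) t <=
            ln 4 * sum_f_R0 (fun j => if (j <? 2)%nat then 0 else g j) t.
Proof.
  intros hmono hpos t.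
  assert (ln4pos : 0 < ln 4) by (rewrite <- ln_1; apply ln_increasing; lra).
  destruct t as [|t].
  - simpl. rewrite ap_01 by lia. lra.
  - assert (Q : forall t, sum_f_R0 (fun p => ap p * g p) (S t) <=
       ln 4 * sum_f_R0 (fun j => if (j <? 2)%nat then 0 else g j) (S t)
       + (sum_f_R0 ap (S t) - INR t * ln 4) * g (S t)).
    { induction t0 as [|t0 IH].
      - simpl. rewrite !ap_01 by lia. lra.
      - rewrite !(tech5 _ (S t0)).
        replace ((S (S t0) <? 2)%nat) with false by (symmetry; apply Nat.ltb_ge; lia).
        pose proof (theta_le (S t0)) as ht. simpl Nat.pred in ht.
        assert (hc : (sum_f_R0 ap (S t0) - INR t0 * ln 4) * g (S t0) <=
                     (sum_f_R0 ap (S t0) - INR t0 * ln 4) * g (S (S t0))).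
        { destruct t0 as [|t1].
          - simpl. rewrite !ap_01 by lia. lra.
          - apply Rmult_le_compat_neg_l; [lra|]. apply hmono; lia. }
        rewrite S_INR. nra. }
    specialize (Q t).
    pose proof (theta_le (S t)) as ht. simpl Nat.pred in ht.
    assert (0 <= g (S t) \/ t = 0%nat) as [hg|ht0].
    { destruct t; [right; reflexivity| left; apply hpos; lia]. }
    + assert ((sum_f_R0 ap (S t) - INR t * ln 4) * g (S t) <= 0).
      { nra. }
      lra.
    + subst. simpl. rewrite !ap_01 by lia. lra.
Qed.

Lemma B_R_bound n : (2 <= n)%nat -> B_R n <= (INR n - 1) * (ln 4 * sum_f_R0 (cc n) n).
Proof.
  intros hn.
  unfold B_R.
  apply Rle_trans with (sum_f_R0 (fun p => (INR n - 1) * (ap p * hh n p)) n).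
  - apply sum_Rle. intros; apply term_bound; auto.
  - assert (e : sum_f_R0 (fun p => (INR n - 1) * (ap p * hh n p)) n =
               (INR n - 1) * sum_f_R0 (fun p => ap p * hh n p) n).
    { rewrite scal_sum. apply sum_eq. intros; ring. }
    rewrite e. apply Rmult_le_compat_l.
    + assert (1 <= INR n) by (apply (le_INR 1); lia). lra.
    + apply (abel (hh n)); intros; [apply hh_mono | apply hh_nonneg]; auto.
Qed.

Open Scope R_scope.

Lemma sq_ge x a b : 0 <= a -> a <= x -> b <= a * a -> b <= x * x.
Proof. intros; nra. Qed.

Lemma exp_double y : exp (2 * y) = exp y * exp y.
Proof. replace (2 * y) with (y + y) by ring. apply exp_plus. Qed.

Lemma ln2_le : ln 2 <= 6935 / 10000.
Proof.
  set (x := 6935 / 10000).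
  assert (h10 : 1000677246 / 1000000000 <= exp (x / 1024)).
  { pose proof (exp_ineq1_le (x / 1024)). unfold x in *. lra. }
  assert (e : forall k, exp (x / (2 * k)) * exp (x / (2 * k)) = exp (x / k) \/ k = 0).
  { intros k. destruct (Req_dec k 0); [right; auto|left].
    rewrite <- exp_double. f_equal. field. auto. }
  assert (h9 : 1001354950 / 1000000000 <= exp (x / 512)).
  { destruct (e 512) as [<-|]; [|lra]. replace (2 * 512) with 1024 by lra.
    apply (sq_ge _ (1000677246 / 1000000000)); lra. }
  assert (h8 : 1002711735 / 1000000000 <= exp (x / 256)).
  { destruct (e 256) as [<-|]; [|lra]. replace (2 * 256) with 512 by lra.
    apply (sq_ge _ (1001354950 / 1000000000)); lra. }
  assert (h7 : 1005430823 / 1000000000 <= exp (x / 128)).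
  { destruct (e 128) as [<-|]; [|lra]. replace (2 * 128) with 256 by lra.
    apply (sq_ge _ (1002711735 / 1000000000)); lra. }
  assert (h6 : 1010891139 / 1000000000 <= exp (x / 64)).
  { destruct (e 64) as [<-|]; [|lra]. replace (2 * 64) with 128 by lra.
    apply (sq_ge _ (1005430823 / 1000000000)); lra. }
  assert (h5 : 1021900894 / 1000000000 <= exp (x / 32)).
  { destruct (e 32) as [<-|]; [|lra]. replace (2 * 32) with 64 by lra.
    apply (sq_ge _ (1010891139 / 1000000000)); lra. }
  assert (h4 : 1044281437 / 1000000000 <= exp (x / 16)).
  { destruct (e 16) as [<-|]; [|lra]. replace (2 * 16) with 32 by lra.
    apply (sq_ge _ (1021900894 / 1000000000)); lra. }
  assert (h3 : 1090523719 / 1000000000 <= exp (x / 8)).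
  { destruct (e 8) as [<-|]; [|lra]. replace (2 * 8) with 16 by lra.
    apply (sq_ge _ (1044281437 / 1000000000)); lra. }
  assert (h2 : 1189241981 / 1000000000 <= exp (x / 4)).
  { destruct (e 4) as [<-|]; [|lra]. replace (2 * 4) with 8 by lra.
    apply (sq_ge _ (1090523719 / 1000000000)); lra. }
  assert (h1 : 1414296489 / 1000000000 <= exp (x / 2)).
  { destruct (e 2) as [<-|]; [|lra]. replace (2 * 2) with 4 by lra.
    apply (sq_ge _ (1189241981 / 1000000000)); lra. }
  assert (h0 : 2 <= exp x).
  { replace x with (x / 1) by field. destruct (e 1) as [<-|]; [|lra]. replace (2 * 1) with 2 by lra.
    apply (sq_ge _ (1414296489 / 1000000000)); lra. }
  rewrite <- (ln_exp x). apply ln_le'; lra.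
Qed.

Lemma ln4_le : ln 4 <= 1387 / 1000.
Proof.
  replace 4 with (2 * 2) by lra. rewrite ln_mult by lra. pose proof ln2_le. lra.
Qed.

Lemma ln4_pos : 0 < ln 4.
Proof. rewrite <- ln_1; apply ln_increasing; lra. Qed.

Lemma rpow32 x : 0 < x -> Rpower x (3 / 2) = x * sqrt x.
Proof.
  intros hx. replace (3 / 2) with (1 + / 2) by field.
  rewrite Rpower_plus, Rpower_1, Rpower_sqrt; auto.
Qed.

Lemma sum_cut (f : nat -> R) m n : (m <= n)%nat -> (forall j, (m < j)%nat -> (j <= n)%nat -> f j = 0) ->
  sum_f_R0 f n = sum_f_R0 f m.
Proof.
  intros hmn hz. induction n as [|n IH].
  - assert (m = 0%nat) by lia. subst. reflexivity.
  - destruct (Nat.eq_dec m (S n)) as [->|hne]; [reflexivity|].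
    rewrite tech5. rewrite hz by lia. rewrite IH; [lra|lia|]. intros; apply hz; lia.
Qed.

Lemma cc_zero n j : (Nat.sqrt n < j)%nat -> cc n j = 0.
Proof.
  intros h. unfold cc, hh. destruct (j <? 2)%nat; [reflexivity|].
  destruct (j * j <=? n)%nat eqn:E; [|reflexivity].
  apply Nat.leb_le in E. pose proof (Nat.sqrt_spec n ltac:(lia)) as [_ h2].
  assert (S (Nat.sqrt n) * S (Nat.sqrt n) <= j * j)%nat by (apply Nat.mul_le_mono; lia). exfalso; lia.
Qed.

Lemma sum_cc_cut n : sum_f_R0 (cc n) n = sum_f_R0 (cc n) (Nat.sqrt n).
Proof.
  apply sum_cut. apply Nat.sqrt_le_lin. intros; apply cc_zero; auto.
Qed.

Open Scope R_scope.

Lemma INR_div_le a b : (0 < b)%nat -> INR (a / b) <= INR a / INR b.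
Proof.
  intros hb. assert (h : (b * (a / b) <= a)%nat) by (apply Nat.mul_div_le; lia).
  apply le_INR in h. rewrite mult_INR in h.
  assert (0 < INR b) by (apply lt_0_INR; lia).
  apply (Rmult_le_reg_l (INR b)); auto. unfold Rdiv. rewrite <- Rmult_assoc.
  rewrite (Rmult_comm (INR b) (INR a)), Rmult_assoc, Rinv_r by lra. lra.
Qed.

Lemma cc_le_D n j D : (n < Nat.pow 2 D)%nat -> cc n j <= INR D.
Proof.
  intros hD. unfold cc, hh. destruct (j <? 2)%nat eqn:E; [apply pos_INR|].
  apply Nat.ltb_ge in E.
  destruct (j * j <=? n)%nat; [|apply pos_INR].
  unfold hn. apply Rle_trans with (INR (nd j n)); [apply Rmin_l|].
  apply le_INR, nd_le_k; [lia|].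
  pose proof (Nat.pow_le_mono_l 2 j D E). lia.
Qed.

Lemma cc_le_tail n j c : (1 <= c)%nat -> (c < j)%nat ->
  cc n j <= 2 + INR n / INR (S c) * (1 / INR (j - 1) - 1 / INR j).
Proof.
  intros hc hj. unfold cc, hh. destruct (j <? 2)%nat eqn:E.
  { apply Nat.ltb_lt in E. lia. }
  assert (hj1 : 0 < INR (j - 1)) by (apply lt_0_INR; lia).
  assert (hj0 : 0 < INR j) by (apply lt_0_INR; lia).
  assert (hc0 : 0 < INR (S c)) by (apply lt_0_INR; lia).
  assert (hjm : INR (j - 1) = INR j - 1) by (rewrite minus_INR by lia; simpl; lra).
  assert (hcj : INR (S c) <= INR j) by (apply le_INR; lia).
  assert (hn0 : 0 <= INR n) by apply pos_INR.
  assert (key : INR n / INR (S c) * (1 / INR (j - 1) - 1 / INR j) =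
                INR n / (INR (S c) * INR j * INR (j - 1))).
  { rewrite hjm in *. field. repeat split; lra. }
  rewrite key.
  assert (t1 : INR n / (INR j * INR j * INR (j - 1)) <= INR n / (INR (S c) * INR j * INR (j - 1))).
  { unfold Rdiv. apply Rmult_le_compat_l; auto. apply Rinv_le_contravar.
    - repeat apply Rmult_lt_0_compat; lra.
    - apply Rmult_le_compat_r; [lra|]. apply Rmult_le_compat_r; lra. }
  destruct (j * j <=? n)%nat.
  - unfold hn. apply Rle_trans with (2 + INR (n / (j * j)) / INR (j - 1)); [apply Rmin_r|].
    apply Rplus_le_compat_l.
    pose proof (INR_div_le n (j * j) ltac:(nia)) as h. rewrite mult_INR in h.
    apply Rle_trans with (INR n / (INR j * INR j) / INR (j - 1)).
    + unfold Rdiv at 1 3. apply Rmult_le_compat_r; [left; apply Rinv_0_lt_compat; lra|]. auto.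
    + replace (INR n / (INR j * INR j) / INR (j - 1)) with (INR n / (INR j * INR j * INR (j - 1)))
        by (field; repeat split; lra). auto.
  - assert (0 <= INR n / (INR (S c) * INR j * INR (j - 1))).
    { apply div_nonneg; auto. left; repeat apply Rmult_lt_0_compat; lra. }
    lra.
Qed.

Lemma sum_cc_head n c D : (n < Nat.pow 2 D)%nat -> forall t, (1 <= t)%nat -> (t <= c)%nat ->
  sum_f_R0 (cc n) t <= INR (t - 1) * INR D.
Proof.
  intros hD t. induction t as [|t IH]; intros h1 h2; [lia|].
  destruct t as [|t].
  - simpl. unfold cc. simpl. lra.
  - rewrite tech5. pose proof (IH ltac:(lia) ltac:(lia)).
    pose proof (cc_le_D n (S (S t)) D hD).
    replace (S (S t) - 1)%nat with (S (S t - 1)) by lia. rewrite S_INR. lra.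
Qed.

Lemma sum_cc_bound n c D t : (n < Nat.pow 2 D)%nat -> (1 <= c)%nat -> (c <= t)%nat ->
  sum_f_R0 (cc n) t <= INR (c - 1) * INR D + 2 * INR (t - c)
                        + INR n / INR (S c) * (1 / INR c - 1 / INR t).
Proof.
  intros hD hc. induction t as [|t IH]; intros ht; [lia|].
  destruct (Nat.eq_dec c (S t)) as [<-|hne].
  - pose proof (sum_cc_head n c D hD c hc (le_n c)).
    replace (c - c)%nat with 0%nat by lia. simpl (INR 0).
    replace (1 / INR c - 1 / INR c) with 0 by ring. lra.
  - rewrite tech5. specialize (IH ltac:(lia)).
    pose proof (cc_le_tail n (S t) c hc ltac:(lia)) as h.
    replace (S t - 1)%nat with t in h by lia.
    replace (S t - c)%nat with (S (t - c)) by lia. rewrite S_INR. lra.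
Qed.

Open Scope R_scope.

Lemma big_pow_Z (k : nat) : ((11 * (31 + Z.of_nat k)^2 + 1)^2 <= 2^(30 + Z.of_nat k))%Z.
Proof.
  induction k as [|k IH].
  - vm_compute. discriminate.
  - rewrite Nat2Z.inj_succ.
    assert (e1 : (31 + Z.succ (Z.of_nat k) = (31 + Z.of_nat k) + 1)%Z) by lia.
    assert (e2 : (30 + Z.succ (Z.of_nat k) = Z.succ (30 + Z.of_nat k))%Z) by lia.
    rewrite e1, e2, Z.pow_succ_r by lia.
    set (d := (31 + Z.of_nat k)%Z) in *.
    assert (hd : (31 <= d)%Z) by (unfold d; lia).
    assert ((11 * (d + 1)^2 + 1)^2 <= 2 * (11 * d^2 + 1)^2)%Z by nia.
    lia.
Qed.

Lemma mD_bound n : (2^28 <= Z.of_nat n)%Z ->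
  (11 * S (Nat.log2 n) * S (Nat.log2 n) <= Nat.sqrt n)%nat /\ (47 * S (Nat.log2 n) <= Nat.sqrt n)%nat.
Proof.
  intros hn.
  set (m := Nat.sqrt n). set (D := S (Nat.log2 n)).
  pose proof (Nat.sqrt_spec n ltac:(lia)) as [s1 s2]. fold m in s1, s2.
  assert (hn0 : (0 < n)%nat) by lia.
  pose proof (Nat.log2_spec n hn0) as [l1 l2].
  assert (hm : (16384 <= Z.of_nat m)%Z).
  { apply Nat2Z.inj_lt in s2. rewrite Nat2Z.inj_mul in s2. rewrite Nat2Z.inj_succ in s2. nia. }
  assert (hl1 : (2 ^ Z.of_nat (Nat.log2 n) <= Z.of_nat n)%Z).
  { apply Nat2Z.inj_le in l1. rewrite Nat2Z.inj_pow in l1. simpl (Z.of_nat 2) in l1. lia. }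
  assert (hD5 : (5 <= D)%nat).
  { destruct (le_lt_dec 5 D) as [h|h]; auto.
    apply Nat2Z.inj_lt in l2. rewrite Nat2Z.inj_pow in l2. simpl (Z.of_nat 2) in l2.
    assert (Z.of_nat (S (Nat.log2 n)) <= 4)%Z by (unfold D in h; lia).
    assert (2 ^ Z.of_nat (S (Nat.log2 n)) <= 2 ^ 4)%Z by (apply Z.pow_le_mono_r; lia).
    simpl in *. lia. }
  assert (h11 : (11 * D * D <= m)%nat).
  { destruct (le_lt_dec D 30) as [h|h].
    - assert (Z.of_nat D <= 30)%Z by lia. nia.
    - pose proof (big_pow_Z (D - 31)) as hb.
      replace (31 + Z.of_nat (D - 31))%Z with (Z.of_nat D) in hb by lia.
      replace (30 + Z.of_nat (D - 31))%Z with (Z.of_nat (Nat.log2 n)) in hb by (unfold D in *; lia).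
      apply Nat2Z.inj_lt in s2. rewrite Nat2Z.inj_mul, Nat2Z.inj_succ in s2.
      assert ((11 * Z.of_nat D ^ 2 + 1) ^ 2 < (Z.succ (Z.of_nat m)) ^ 2)%Z by nia.
      assert (11 * Z.of_nat D ^ 2 + 1 < Z.succ (Z.of_nat m))%Z.
      { apply Z.pow_lt_mono_l_iff in H; lia. }
      nia. }
  split; auto. nia.
Qed.

Lemma sum_nonneg (f : nat -> R) t : (forall j, 0 <= f j) -> 0 <= sum_f_R0 f t.
Proof. intros h. induction t; simpl; [apply h|]. pose proof (h (S t)); lra. Qed.

Lemma sqrt_ge_m n : INR (Nat.sqrt n) <= sqrt (INR n).
Proof.
  pose proof (Nat.sqrt_spec n ltac:(lia)) as [s1 _].
  apply le_INR in s1. rewrite mult_INR in s1.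
  rewrite <- (sqrt_square (INR (Nat.sqrt n))) by apply pos_INR.
  apply sqrt_le_1_alt; auto.
Qed.

Lemma large n : (2^28 <= Z.of_nat n)%Z -> B_R n <= 4 * Rpower (INR n) (3 / 2).
Proof.
  intros hn.
  destruct (mD_bound n hn) as [h11 h47].
  set (m := Nat.sqrt n) in *. set (D := S (Nat.log2 n)) in *.
  pose proof (Nat.sqrt_spec n ltac:(lia)) as [s1 s2]. fold m in s1, s2.
  assert (hn0 : (0 < n)%nat) by lia.
  pose proof (Nat.log2_spec n hn0) as [l1 l2]. fold D in l2.
  assert (hn2 : (2 <= n)%nat) by lia.
  set (c := (m / (2 * D))%nat).
  assert (hdm := Nat.div_mod m (2 * D) ltac:(lia)).
  assert (hmod := Nat.mod_upper_bound m (2 * D) ltac:(lia)).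
  fold c in hdm.
  set (r := (m mod (2 * D))%nat) in *.
  set (P := (2 * D * c)%nat) in *.
  assert (hc1 : (1 <= c)%nat).
  { destruct (Nat.eq_dec c 0) as [e|e]; [|lia]. unfold P in hdm. rewrite e in hdm. lia. }
  assert (hcP : (c <= P)%nat) by (unfold P; rewrite <- (Nat.mul_1_l c) at 1; apply Nat.mul_le_mono_r; lia).
  assert (hcm : (c <= m)%nat) by lia.
  assert (h2Dc : (P <= m)%nat) by lia.
  assert (hm1 : (m + 1 <= 2 * D * (c + 1))%nat).
  { replace (2 * D * (c + 1))%nat with (P + 2 * D)%nat by (unfold P; ring). lia. }
  assert (F6 : (100 * n <= 38 * m * (c * (c + 1)))%nat).
  { assert (a1 : ((m + 1) * (m + 1 - 2 * D) <= 4 * D * D * (c * (c + 1)))%nat).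
    { replace (4 * D * D * (c * (c + 1)))%nat with ((2 * D * (c + 1)) * P)%nat by (unfold P; ring).
      apply Nat.mul_le_mono; lia. }
    assert (b1 : (100 * n <= 100 * ((m + 1) * (m + 1)))%nat).
    { apply Nat.mul_le_mono_l. replace ((m + 1) * (m + 1))%nat with (S m * S m)%nat by ring. lia. }
    assert (a2 : (11 * (4 * D * D) * (100 * n) <= 400 * m * ((m + 1) * (m + 1)))%nat).
    { apply Nat.le_trans with (11 * (4 * D * D) * (100 * ((m + 1) * (m + 1))))%nat.
      - apply Nat.mul_le_mono_l; auto.
      - replace (11 * (4 * D * D) * (100 * ((m + 1) * (m + 1))))%nat
          with ((4 * (11 * D * D)) * (100 * ((m + 1) * (m + 1))))%nat by ring.
        replace (400 * m * ((m + 1) * (m + 1)))%nat with ((4 * m) * (100 * ((m + 1) * (m + 1))))%nat by ring.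
        apply Nat.mul_le_mono_r. lia. }
    assert (a3 : (400 * m * ((m + 1) * (m + 1)) <= 418 * m * ((m + 1) * (m + 1 - 2 * D)))%nat).
    { replace (400 * m * ((m + 1) * (m + 1)))%nat with ((m * (m + 1)) * (400 * (m + 1)))%nat by ring.
      replace (418 * m * ((m + 1) * (m + 1 - 2 * D)))%nat with ((m * (m + 1)) * (418 * (m + 1 - 2 * D)))%nat by ring.
      apply Nat.mul_le_mono_l. lia. }
    assert (a5 : (418 * m * ((m + 1) * (m + 1 - 2 * D)) <= 418 * m * (4 * D * D * (c * (c + 1))))%nat).
    { apply Nat.mul_le_mono_l; auto. }
    assert (a4 : (11 * (4 * D * D) * (100 * n) <= 11 * (4 * D * D) * (38 * m * (c * (c + 1))))%nat).
    { replace (11 * (4 * D * D) * (38 * m * (c * (c + 1))))%nat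
        with (418 * m * (4 * D * D * (c * (c + 1))))%nat by ring. lia. }
    apply Nat.mul_le_mono_pos_l in a4; [auto|].
    assert (0 < D * D)%nat by (apply Nat.mul_pos_pos; lia). lia. }
  pose proof (B_R_bound n hn2) as hB.
  rewrite sum_cc_cut in hB. fold m in hB.
  pose proof (sum_cc_bound n c D m l2 hc1 hcm) as hS.
  assert (hSnn : 0 <= sum_f_R0 (cc n) m) by (apply sum_nonneg; apply cc_nonneg).
  assert (rc1 : 1 <= INR c) by (apply (le_INR 1); auto).
  assert (rm : INR c <= INR m) by (apply le_INR; auto).
  assert (rF6 : 100 * INR n <= 38 * INR m * (INR c * (INR c + 1))).
  { apply le_INR in F6. rewrite !mult_INR, plus_INR in F6. simpl in F6. lra. }
  assert (r2Dc : 2 * INR D * INR c <= INR m).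
  { apply le_INR in h2Dc. unfold P in h2Dc. rewrite !mult_INR in h2Dc. replace (INR 2) with 2 in h2Dc by (simpl; lra). lra. }
  assert (rcm1 : INR (c - 1) = INR c - 1) by (rewrite minus_INR by lia; simpl; lra).
  assert (rmc : INR (m - c) = INR m - INR c) by (rewrite minus_INR by lia; lra).
  rewrite rcm1, rmc in hS. rewrite S_INR in hS.
  assert (rD : 0 <= INR D) by apply pos_INR.
  assert (rn : 0 <= INR n) by apply pos_INR.
  assert (tail : INR n / (INR c + 1) * (1 / INR c - 1 / INR m) <= 38 / 100 * INR m).
  { assert (t1 : INR n / (INR c + 1) * (1 / INR c - 1 / INR m) <= INR n / (INR c * (INR c + 1))).
    { assert (0 <= INR n / (INR c + 1) * (1 / INR m)).
      { apply Rmult_le_pos. apply div_nonneg; lra. apply div_nonneg; lra. }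
      replace (INR n / (INR c * (INR c + 1))) with (INR n / (INR c + 1) * (1 / INR c)) by (field; lra).
      replace (INR n / (INR c + 1) * (1 / INR c - 1 / INR m))
        with (INR n / (INR c + 1) * (1 / INR c) - INR n / (INR c + 1) * (1 / INR m)) by ring.
      lra. }
    assert (t2 : INR n / (INR c * (INR c + 1)) <= 38 / 100 * INR m).
    { assert (hcc : 0 < INR c * (INR c + 1)) by (apply Rmult_lt_0_compat; lra).
      apply (Rmult_le_reg_r (INR c * (INR c + 1))); auto.
      unfold Rdiv. rewrite Rmult_assoc, Rinv_l by lra. lra. }
    lra. }
  assert (hcD : (INR c - 1) * INR D <= INR m / 2).
  { assert (INR c * INR D <= INR m / 2) by lra.
    assert (0 <= INR D) by lra. lra. }
  assert (hX : sum_f_R0 (cc n) m <= 288 / 100 * INR m) by lra.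
  pose proof ln4_le as hl4. pose proof ln4_pos as hl4p.
  assert (hn1 : 1 <= INR n) by (apply (le_INR 1); lia).
  assert (hsq := sqrt_ge_m n). fold m in hsq.
  rewrite rpow32 by lra.
  apply Rle_trans with ((INR n - 1) * (ln 4 * sum_f_R0 (cc n) m)); auto.
  apply Rle_trans with (INR n * (1387 / 1000 * (288 / 100 * INR m))).
  - apply Rmult_le_compat; try lra.
    + apply Rmult_le_pos; lra.
    + apply Rmult_le_compat; lra.
  - assert (INR n * INR m <= INR n * sqrt (INR n)) by (apply Rmult_le_compat_l; lra).
    assert (0 <= INR n * sqrt (INR n)) by (apply Rmult_le_pos; [lra|apply sqrt_pos]). nra.
Qed.

Open Scope R_scope.

Fixpoint dsZ (f : nat) (p n : Z) : Z :=
  match f with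
  | O => 0
  | S f' => if (n <=? 0)%Z then 0%Z else (n mod p + dsZ f' p (n / p))%Z
  end.

Fixpoint ndZ (f : nat) (p n : Z) : Z :=
  match f with
  | O => 0
  | S f' => if (n <=? 0)%Z then 0%Z else (1 + ndZ f' p (n / p))%Z
  end.

Lemma div_small_fuel (p n : nat) (f : nat) : (2 <= p)%nat ->
  (Z.of_nat n < 2 ^ Z.of_nat (S f))%Z -> (Z.of_nat (n / p) < 2 ^ Z.of_nat f)%Z.
Proof.
  intros hp h. rewrite Nat2Z.inj_succ, Z.pow_succ_r in h by lia.
  assert (h1 : (p * (n / p) <= n)%nat) by (apply Nat.mul_div_le; lia).
  assert (h2 : (2 * (n / p) <= p * (n / p))%nat) by (apply Nat.mul_le_mono_r; lia).
  lia.
Qed.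

Lemma dsZ_ok f : forall p n, (2 <= p)%nat -> (Z.of_nat n < 2 ^ Z.of_nat f)%Z ->
  dsZ f (Z.of_nat p) (Z.of_nat n) = Z.of_nat (digit_sum p n).
Proof.
  induction f as [|f IH]; intros p n hp hn.
  - simpl in hn. assert (n = 0%nat) by lia. subst. reflexivity.
  - cbn [dsZ]. destruct (Z.of_nat n <=? 0)%Z eqn:E.
    + assert (n = 0%nat) by lia. subst. reflexivity.
    + rewrite <- Nat2Z.inj_div, <- Nat2Z.inj_mod.
      rewrite IH by (auto; apply div_small_fuel; auto).
      rewrite (ds_eq p n hp). lia.
Qed.

Lemma ndZ_ok f : forall p n, (2 <= p)%nat -> (Z.of_nat n < 2 ^ Z.of_nat f)%Z ->
  ndZ f (Z.of_nat p) (Z.of_nat n) = Z.of_nat (nd p n).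
Proof.
  induction f as [|f IH]; intros p n hp hn.
  - simpl in hn. assert (n = 0%nat) by lia. subst. reflexivity.
  - cbn [ndZ]. destruct (Z.of_nat n <=? 0)%Z eqn:E.
    + assert (n = 0%nat) by lia. subst. reflexivity.
    + rewrite <- Nat2Z.inj_div.
      rewrite IH by (auto; apply div_small_fuel; auto).
      apply Z.leb_gt in E. rewrite (nd_eq p n hp) by lia. lia.
Qed.

Definition ceilZ (a b : Z) : Z := ((a + b - 1) / b)%Z.

Lemma ceilZ_ge a b : (0 < b)%Z -> IZR a / IZR b <= IZR (ceilZ a b).
Proof.
  intros hb. unfold ceilZ.
  pose proof (Z.div_mod (a + b - 1) b ltac:(lia)) as h.
  pose proof (Z.mod_pos_bound (a + b - 1) b hb) as h2.
  assert (h3 : (a <= b * ((a + b - 1) / b))%Z) by lia.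
  apply IZR_le in h3. rewrite mult_IZR in h3.
  assert (0 < IZR b) by (apply IZR_lt; lia).
  apply (Rmult_le_reg_l (IZR b)); auto. unfold Rdiv.
  rewrite <- Rmult_assoc, (Rmult_comm (IZR b) (IZR a)), Rmult_assoc, Rinv_r by lra. lra.
Qed.

Definition compb (p : nat) : bool := existsb (fun d => Nat.eqb (p mod d) 0) (seq 2 (p - 2)).

Lemma compb_not_prime p : compb p = true -> ~ Znumtheory.prime (Z.of_nat p).
Proof.
  intros h hp. unfold compb in h. apply existsb_exists in h as [d [hin hd]].
  apply in_seq in hin. apply Nat.eqb_eq in hd.
  apply Znumtheory.prime_alt in hp. destruct hp as [_ hp].
  apply (hp (Z.of_nat d)); [lia|].
  apply Nat.Div0.mod_divides in hd. destruct hd as [k hk].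
  exists (Z.of_nat k). lia.
Qed.

Lemma ln_p_bound (p : nat) : (2 <= p)%nat ->
  ln (INR p) <= IZR (Z.log2_up (Z.of_nat p ^ 16)) * 6935 / 160000.
Proof.
  intros hp.
  set (L := Z.log2_up (Z.of_nat p ^ 16)).
  assert (h1 : (1 < Z.of_nat p ^ 16)%Z).
  { apply Z.pow_gt_1; lia. }
  pose proof (Z.log2_up_spec _ h1) as [_ h2]. fold L in h2.
  assert (hL : (0 <= L)%Z) by (apply Z.log2_up_nonneg).
  replace (2 ^ L)%Z with (2 ^ Z.of_nat (Z.to_nat L))%Z in h2 by (rewrite Z2Nat.id; lia).
  replace (Z.of_nat p ^ 16)%Z with (Z.of_nat p ^ Z.of_nat 16)%Z in h2 by reflexivity.
  apply IZR_le in h2. rewrite <- !pow_IZR in h2.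
  rewrite <- INR_IZR_INZ in h2.
  assert (hp0 : 0 < INR p) by (apply lt_0_INR; lia).
  assert (e : ln (INR p ^ 16) <= ln (IZR 2 ^ Z.to_nat L)).
  { apply ln_le'; auto. apply pow_lt; auto. }
  rewrite !ln_pow in e by (try apply IZR_lt; lra).
  rewrite (ln_pow 2) in e by lra. rewrite (INR_IZR_INZ (Z.to_nat L)) in e. rewrite Z2Nat.id in e by lia.
  pose proof ln2_le.
  assert (0 <= IZR L) by (apply IZR_le; lia).
  replace (IZR 2) with 2 in e by reflexivity.
  replace (INR 16) with 16 in e by (simpl; lra).
  nra.
Qed.

Definition termS (nZ : Z) (p : nat) : Z :=
  if ((2 <=? p)%nat && negb (compb p))%bool then
    let pZ := Z.of_nat p in
    if (pZ * pZ <=? nZ)%Z then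
      ceilZ ((nZ - 1) * dsZ 64 pZ nZ * Z.log2_up (pZ ^ 16) * 6935) (pZ - 1)
    else 0%Z
  else 0%Z.

Fixpoint sumS (nZ : Z) (t : nat) : Z :=
  match t with
  | O => termS nZ 0
  | S t' => (sumS nZ t' + termS nZ t)%Z
  end.

Definition checkS (n : nat) : bool :=
  let nZ := Z.of_nat n in
  (100 * sumS nZ (Nat.sqrt n) <=? 640000 * nZ * Z.sqrt (10000 * nZ))%Z.

Lemma sumS_IZR nZ t : IZR (sumS nZ t) = sum_f_R0 (fun p => IZR (termS nZ p)) t.
Proof. induction t; simpl; [reflexivity|]. rewrite plus_IZR, IHt. reflexivity. Qed.

Lemma B_R_term_nonprime n p : ~ Znumtheory.prime (Z.of_nat p) -> B_R_term n p = 0.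
Proof.
  intros h. unfold B_R_term. destruct (_ <=? _)%Z; [|reflexivity].
  destruct (Znumtheory.prime_dec _); [contradiction|reflexivity].
Qed.

Lemma dsZ_nonneg f : forall p n, (0 <= p)%Z -> (0 <= dsZ f p n)%Z.
Proof.
  induction f as [|f IH]; intros p n hp; cbn [dsZ]; [lia|].
  destruct (n <=? 0)%Z eqn:E; [lia|]. apply Z.leb_gt in E.
  specialize (IH p (n / p)%Z hp).
  destruct (Z.eq_dec p 0) as [e|e].
  - subst. rewrite Zmod_0_r. lia.
  - pose proof (Z.mod_pos_bound n p ltac:(lia)). lia.
Qed.

Lemma termS_nonneg nZ p : (0 <= nZ)%Z -> (0 <= termS nZ p)%Z.
Proof.
  intros hn. unfold termS. destruct (_ && _)%bool eqn:E; [|lia].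
  apply andb_prop in E as [E1 _]. apply Nat.leb_le in E1.
  destruct (_ <=? _)%Z eqn:E2; [|lia].
  unfold ceilZ. apply Z.div_pos; [|lia].
  assert (0 <= dsZ 64 (Z.of_nat p) nZ)%Z.
  { apply dsZ_nonneg; lia. }
  assert (0 <= Z.log2_up (Z.of_nat p ^ 16))%Z by apply Z.log2_up_nonneg.
  apply Z.leb_le in E2. assert (1 <= nZ)%Z by nia.
  assert (0 <= (nZ - 1) * dsZ 64 (Z.of_nat p) nZ * Z.log2_up (Z.of_nat p ^ 16))%Z.
  { apply Z.mul_nonneg_nonneg; [apply Z.mul_nonneg_nonneg|]; lia. }
  lia.
Qed.

Lemma term_le_termS n p : (2 <= n)%nat -> (Z.of_nat n < 2 ^ 64)%Z ->
  B_R_term n p <= IZR (termS (Z.of_nat n) p) / 160000.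
Proof.
  intros hn hbig.
  assert (hT : 0 <= IZR (termS (Z.of_nat n) p) / 160000).
  { apply div_nonneg; [apply IZR_le, termS_nonneg; lia| lra]. }
  destruct (Znumtheory.prime_dec (Z.of_nat p)) as [hp|hp];
    [|rewrite B_R_term_nonprime; auto].
  pose proof (Znumtheory.prime_ge_2 _ hp) as hp2. assert (hp2' : (2 <= p)%nat) by lia.
  assert (hc : compb p = false).
  { destruct (compb p) eqn:E; auto. exfalso; apply (compb_not_prime p E hp). }
  unfold termS, B_R_term. rewrite hc.
  replace ((2 <=? p)%nat && negb false)%bool with true by (symmetry; apply andb_true_intro; split; [apply Nat.leb_le; lia|reflexivity]).
  cbv zeta.
  destruct (Z.of_nat p * Z.of_nat p <=? Z.of_nat n)%Z eqn:E; [|lra].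
  destruct (Znumtheory.prime_dec (Z.of_nat p)); [|contradiction].
  rewrite dsZ_ok by (auto; lia).
  set (L := Z.log2_up (Z.of_nat p ^ 16)).
  pose proof (ln_p_bound p hp2') as hl. fold L in hl.
  assert (hpm : (0 < Z.of_nat p - 1)%Z) by lia.
  pose proof (ceilZ_ge ((Z.of_nat n - 1) * Z.of_nat (digit_sum p n) * L * 6935) (Z.of_nat p - 1) hpm) as hc2.
  rewrite !mult_IZR, !minus_IZR in hc2. rewrite <- !INR_IZR_INZ in hc2.
  assert (hp1 : 0 < INR p - 1) by (assert (2 <= INR p) by (apply (le_INR 2); lia); lra).
  assert (hn1 : 0 <= INR n - 1) by (assert (2 <= INR n) by (apply (le_INR 2); lia); lra).
  assert (hlp : 0 <= ln (INR p)) by (rewrite <- ln_1; apply ln_le'; [lra|]; assert (2 <= INR p) by (apply (le_INR 2); lia); lra).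
  assert (hds : 0 <= INR (digit_sum p n)) by apply pos_INR.
  apply Rle_trans with ((INR n - 1) * INR (digit_sum p n) * IZR L * 6935 / (INR p - 1) / 160000).
  - replace ((INR n - 1) / (INR p - 1) * INR (digit_sum p n) * ln (INR p))
      with ((INR n - 1) * INR (digit_sum p n) / (INR p - 1) * ln (INR p)) by (field; lra).
    replace ((INR n - 1) * INR (digit_sum p n) * IZR L * 6935 / (INR p - 1) / 160000)
      with ((INR n - 1) * INR (digit_sum p n) / (INR p - 1) * (IZR L * 6935 / 160000)) by (field; lra).
    apply Rmult_le_compat_l; auto.
    apply div_nonneg; [apply Rmult_le_pos|]; lra.
  - unfold Rdiv at 2. unfold Rdiv in hc2. apply Rmult_le_compat_r; [lra|]. exact hc2.
Qed.

Lemma sum_le_ext (f : nat -> R) t t' : (t <= t')%nat -> (forall j, 0 <= f j) ->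
  sum_f_R0 f t <= sum_f_R0 f t'.
Proof.
  intros h hf. induction h; [lra|]. rewrite tech5. pose proof (hf (S m)). lra.
Qed.

Lemma sqrt_from_Z n : IZR (Z.sqrt (10000 * Z.of_nat n)) / 100 <= sqrt (INR n).
Proof.
  set (s := Z.sqrt (10000 * Z.of_nat n)).
  pose proof (Z.sqrt_spec (10000 * Z.of_nat n) ltac:(lia)) as [h1 _]. fold s in h1.
  assert (hs : (0 <= s)%Z) by apply Z.sqrt_nonneg.
  apply IZR_le in h1. rewrite !mult_IZR in h1. rewrite <- INR_IZR_INZ in h1.
  rewrite <- (sqrt_square (IZR s / 100)).
  - apply sqrt_le_1_alt. assert (0 <= IZR s) by (apply IZR_le; lia). nra.
  - apply div_nonneg; [apply IZR_le; lia|lra].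
Qed.

Lemma small_ok n : (2 <= n)%nat -> (n < 1768)%nat -> checkS n = true -> B_R n <= 4 * Rpower (INR n) (3 / 2).
Proof.
  intros hn hn' hc. unfold checkS in hc. apply Z.leb_le in hc.
  assert (hbig : (Z.of_nat n < 2 ^ 64)%Z) by (simpl; lia).
  unfold B_R.
  apply Rle_trans with (sum_f_R0 (fun p => IZR (termS (Z.of_nat n) p) / 160000) n).
  { apply sum_Rle. intros; apply term_le_termS; auto. }
  rewrite (sum_cut _ (Nat.sqrt n) n).
  2: { apply Nat.sqrt_le_lin. }
  2: { intros j hj _. unfold termS.
       destruct (_ && _)%bool; [|unfold Rdiv; lra].
       cbv zeta. destruct (Z.of_nat j * Z.of_nat j <=? Z.of_nat n)%Z eqn:E; [|unfold Rdiv; lra].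
       apply Z.leb_le in E. pose proof (Nat.sqrt_spec n ltac:(lia)) as [_ h2].
       assert (S (Nat.sqrt n) * S (Nat.sqrt n) <= j * j)%nat by (apply Nat.mul_le_mono; lia).
       exfalso; lia. }
  assert (e : sum_f_R0 (fun p => IZR (termS (Z.of_nat n) p)) (Nat.sqrt n) = IZR (sumS (Z.of_nat n) (Nat.sqrt n))) by (rewrite sumS_IZR; reflexivity).
  replace (sum_f_R0 (fun i : nat => IZR (termS (Z.of_nat n) i) / 160000) (Nat.sqrt n))
    with (/ 160000 * sum_f_R0 (fun p => IZR (termS (Z.of_nat n) p)) (Nat.sqrt n)).
  2: { rewrite scal_sum. apply sum_eq. intros; unfold Rdiv; ring. }
  rewrite e.
  apply IZR_le in hc. rewrite !mult_IZR in hc. rewrite <- INR_IZR_INZ in hc.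
  pose proof (sqrt_from_Z n) as hs.
  assert (hn0 : 0 < INR n) by (apply lt_0_INR; lia).
  rewrite rpow32 by lra.
  assert (INR n * (IZR (Z.sqrt (10000 * Z.of_nat n)) / 100) <= INR n * sqrt (INR n)) by (apply Rmult_le_compat_l; lra).
  lra.
Qed.

Open Scope R_scope.

Definition termM (NZ j : Z) : Z :=
  Z.min (1000 * ndZ 64 j NZ) (2000 + ceilZ (1000 * (NZ / (j * j))) (j - 1)).

Fixpoint loopM (NZ : Z) (f : nat) (j : Z) : Z :=
  match f with
  | O => 0%Z
  | S f' => (termM NZ j + loopM NZ f' (j + 1))%Z
  end.

Definition ScZ (NZ : Z) : Z := loopM NZ (Z.to_nat (Z.sqrt NZ - 1)) 2.

Definition chkM (N N' : Z) : bool :=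
  ((4 <=? N)%Z && (N <=? N')%Z && (N' <? 2 ^ 60)%Z &&
   (1387 * (N' - 1) * ScZ N' <=? 40000 * N * Z.sqrt (10000 * N))%Z)%bool.

Fixpoint covers (l : list (Z * Z)) (s e : Z) : bool :=
  match l with
  | nil => (e <? s)%Z
  | (N, N') :: l' => ((N =? s)%Z && chkM N N' && covers l' (N' + 1) e)%bool
  end.

Lemma covers_ok l : forall s e, covers l s e = true -> forall n, (s <= n <= e)%Z ->
  exists N N', chkM N N' = true /\ (N <= n <= N')%Z.
Proof.
  induction l as [|[N N'] l IH]; intros s e h n hn; simpl in h.
  - apply Z.ltb_lt in h. lia.
  - apply andb_prop in h as [h h3]. apply andb_prop in h as [h1 h2].
    apply Z.eqb_eq in h1. subst.
    destruct (Z.le_gt_cases n N') as [hle|hgt].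
    + exists s, N'. split; auto. lia.
    + apply (IH (N' + 1)%Z e h3 n). lia.
Qed.

Fixpoint rs (g : nat -> R) (a f : nat) : R :=
  match f with
  | O => 0
  | S f' => g a + rs g (S a) f'
  end.

Lemma rs_snoc g f : forall a, rs g a (S f) = rs g a f + g (a + f)%nat.
Proof.
  induction f as [|f IH]; intros a.
  - simpl. rewrite Nat.add_0_r. ring.
  - change (rs g a (S (S f))) with (g a + rs g (S a) (S f)). rewrite IH.
    simpl. replace (S (a + f))%nat with (a + S f)%nat by lia. ring.
Qed.

Lemma sum_rs g t : sum_f_R0 g t = rs g 0 (S t).
Proof.
  induction t as [|t IH]; [simpl; ring|].
  rewrite tech5, IH, (rs_snoc g (S t) 0). reflexivity.
Qed.

Lemma loopM_rs NZ f : forall j0, IZR (loopM NZ f (Z.of_nat j0)) = rs (fun j => IZR (termM NZ (Z.of_nat j))) j0 f.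
Proof.
  induction f as [|f IH]; intros j0; [reflexivity|].
  cbn [loopM rs]. rewrite plus_IZR. f_equal.
  replace (Z.of_nat j0 + 1)%Z with (Z.of_nat (S j0)) by lia. apply IH.
Qed.

Lemma rs_le g g' a f : (forall j, (a <= j)%nat -> (j < a + f)%nat -> g j <= g' j) -> rs g a f <= rs g' a f.
Proof.
  revert a. induction f as [|f IH]; intros a h; simpl; [lra|].
  pose proof (h a ltac:(lia) ltac:(lia)). pose proof (IH (S a) ltac:(intros; apply h; lia)). lra.
Qed.

Lemma cc_le_termM N j : (2 <= j)%nat -> (Z.of_nat N < 2 ^ 64)%Z ->
  cc N j <= IZR (termM (Z.of_nat N) (Z.of_nat j)) / 1000.
Proof.
  intros hj hN. unfold cc.
  replace (j <? 2)%nat with false by (symmetry; apply Nat.ltb_ge; lia).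
  unfold hh. destruct (j * j <=? N)%nat.
  2: { apply div_nonneg; [|lra]. unfold termM. apply IZR_le.
       apply Z.min_glb.
       - rewrite ndZ_ok by (auto; lia). lia.
       - unfold ceilZ. assert (0 <= 1000 * (Z.of_nat N / (Z.of_nat j * Z.of_nat j)))%Z.
         { apply Z.mul_nonneg_nonneg; [lia|]. apply Z.div_pos; lia. }
         assert (0 <= (1000 * (Z.of_nat N / (Z.of_nat j * Z.of_nat j)) + (Z.of_nat j - 1) - 1) / (Z.of_nat j - 1))%Z.
         { apply Z.div_pos; lia. }
         lia. }
  unfold hn, termM.
  rewrite ndZ_ok by (auto; lia).
  set (A := (1000 * Z.of_nat (nd j N))%Z).
  set (B := (2000 + ceilZ (1000 * (Z.of_nat N / (Z.of_nat j * Z.of_nat j))) (Z.of_nat j - 1))%Z).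
  assert (hA : INR (nd j N) <= IZR A / 1000).
  { unfold A. rewrite mult_IZR, <- INR_IZR_INZ. lra. }
  assert (hB : 2 + INR (N / (j * j)) / INR (j - 1) <= IZR B / 1000).
  { unfold B. rewrite plus_IZR.
    assert (hj1 : (0 < Z.of_nat j - 1)%Z) by lia.
    pose proof (ceilZ_ge (1000 * (Z.of_nat N / (Z.of_nat j * Z.of_nat j))) (Z.of_nat j - 1) hj1) as hc.
    rewrite <- Nat2Z.inj_mul, <- Nat2Z.inj_div in hc.
    rewrite mult_IZR, minus_IZR, <- !INR_IZR_INZ in hc.
    assert (e : INR j - 1 = INR (j - 1)) by (rewrite minus_INR by lia; simpl; lra).
    rewrite e in hc.
    assert (0 < INR (j - 1)) by (apply lt_0_INR; lia).
    replace (IZR 1000 * INR (N / (j * j)) / INR (j - 1)) with (1000 * (INR (N / (j * j)) / INR (j - 1))) in hc by (field; lra).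
    rewrite <- Nat2Z.inj_mul, <- Nat2Z.inj_div. lra. }
  destruct (Z.min_spec A B) as [[_ ->]|[_ ->]].
  - apply Rle_trans with (INR (nd j N)); [apply Rmin_l|auto].
  - apply Rle_trans with (2 + INR (N / (j * j)) / INR (j - 1)); [apply Rmin_r|auto].
Qed.

Lemma Zsqrt_nat x : Z.sqrt (Z.of_nat x) = Z.of_nat (Nat.sqrt x).
Proof.
  pose proof (Nat.sqrt_spec x ltac:(lia)) as [h1 h2].
  apply Z.sqrt_unique. split; lia.
Qed.

Lemma mid_ok N N' n : chkM N N' = true -> (N <= Z.of_nat n <= N')%Z ->
  B_R n <= 4 * Rpower (INR n) (3 / 2).
Proof.
  intros hc hn. unfold chkM in hc.
  apply andb_prop in hc as [hc hc4]. apply andb_prop in hc as [hc hc3]. apply andb_prop in hc as [hc1 hc2].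
  apply Z.leb_le in hc1. apply Z.leb_le in hc2. apply Z.ltb_lt in hc3. apply Z.leb_le in hc4.
  set (Nn := Z.to_nat N').
  assert (hNn : Z.of_nat Nn = N') by (unfold Nn; rewrite Z2Nat.id; lia).
  assert (hn2 : (2 <= n)%nat) by lia.
  assert (hnN : (n <= Nn)%nat) by lia.
  set (m' := Nat.sqrt Nn).
  assert (hm2 : (2 <= m')%nat).
  { unfold m'. assert (4 <= Nn)%nat by lia. pose proof (Nat.sqrt_le_mono 4 Nn H). replace (Nat.sqrt 4) with 2%nat in H0 by reflexivity. lia. }
  assert (hS : sum_f_R0 (cc n) n <= IZR (ScZ N') / 1000).
  { apply Rle_trans with (sum_f_R0 (cc n) Nn).
    { apply sum_le_ext; auto. apply cc_nonneg. }
    apply Rle_trans with (sum_f_R0 (cc Nn) Nn).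
    { apply sum_Rle. intros; apply cc_mono_n; auto. }
    rewrite sum_cc_cut. fold m'.
    rewrite sum_rs.
    replace (S m') with (S (S (m' - 1))) by lia.
    change (rs (cc Nn) 0 (S (S (m' - 1)))) with (cc Nn 0 + (cc Nn 1 + rs (cc Nn) 2 (m' - 1))).
    replace (cc Nn 0) with 0 by reflexivity. replace (cc Nn 1) with 0 by reflexivity.
    unfold ScZ. rewrite <- hNn.
    replace (Z.to_nat (Z.sqrt (Z.of_nat Nn) - 1)) with (m' - 1)%nat.
    2: { unfold m'. rewrite Zsqrt_nat. lia. }
    change 2%Z with (Z.of_nat 2).
    rewrite loopM_rs.
    assert (e : forall f a, rs (fun j => IZR (termM (Z.of_nat Nn) (Z.of_nat j))) a f / 1000
                  = rs (fun j => IZR (termM (Z.of_nat Nn) (Z.of_nat j)) / 1000) a f).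
    { induction f as [|f IH]; intros a; simpl; [lra|]. rewrite <- IH. lra. }
    rewrite e.
    assert (rs (cc Nn) 2 (m' - 1) <= rs (fun j => IZR (termM (Z.of_nat Nn) (Z.of_nat j)) / 1000) 2 (m' - 1)).
    { apply rs_le. intros j hj _. apply cc_le_termM; auto. lia. }
    lra. }
  pose proof (B_R_bound n hn2) as hB.
  pose proof ln4_le as hl4. pose proof ln4_pos as hl4p.
  assert (hSnn : 0 <= sum_f_R0 (cc n) n) by (apply sum_nonneg; apply cc_nonneg).
  apply IZR_le in hc4. rewrite !mult_IZR, minus_IZR in hc4.
  assert (hnR : IZR N <= INR n) by (rewrite INR_IZR_INZ; apply IZR_le; lia).
  assert (hnR' : INR n <= IZR N') by (rewrite INR_IZR_INZ; apply IZR_le; lia).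
  assert (hN2 : 2 <= IZR N) by (apply IZR_le; lia).
  assert (hsq : IZR (Z.sqrt (10000 * N)) / 100 <= sqrt (INR n)).
  { replace N with (Z.of_nat (Z.to_nat N)) at 1 by (rewrite Z2Nat.id; lia).
    apply Rle_trans with (sqrt (INR (Z.to_nat N))); [apply sqrt_from_Z|].
    apply sqrt_le_1_alt. rewrite INR_IZR_INZ, Z2Nat.id by lia. auto. }
  assert (hsq0 : 0 <= IZR (Z.sqrt (10000 * N))) by (apply IZR_le, Z.sqrt_nonneg).
  assert (hn1 : 1 <= INR n) by (apply (le_INR 1); lia).
  assert (hScnn : 0 <= IZR (ScZ N')) by (assert (0 <= IZR (ScZ N') / 1000) by lra; lra).
  rewrite rpow32 by lra.
  apply Rle_trans with ((INR n - 1) * (ln 4 * sum_f_R0 (cc n) n)); auto.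
  apply Rle_trans with ((IZR N' - 1) * (1387 / 1000 * (IZR (ScZ N') / 1000))).
  { apply Rmult_le_compat; try lra.
    - apply Rmult_le_pos; lra.
    - apply Rmult_le_compat; lra. }
  apply Rle_trans with (4 * (IZR N * (IZR (Z.sqrt (10000 * N)) / 100))).
  { replace (IZR 1387) with 1387 in hc4 by reflexivity.
    replace (IZR 40000) with 40000 in hc4 by reflexivity. lra. }
  apply Rmult_le_compat_l; [lra|].
  apply Rmult_le_compat; try lra.
Qed.

Open Scope R_scope.

Definition blocks : list (Z * Z) := [(1768, 1768)%Z; (1769, 1769)%Z; (1770, 1771)%Z; (1772, 1774)%Z; (1775, 1779)%Z; (1780, 1786)%Z; (1787, 1796)%Z; (1797, 1807)%Z; (1808, 1822)%Z; (1823, 1844)%Z; (1845, 1848)%Z; (1849, 1853)%Z; (1854, 1859)%Z; (1860, 1868)%Z; (1869, 1880)%Z; (1881, 1898)%Z; (1899, 1925)%Z; (1926, 1935)%Z; (1936, 1947)%Z; (1948, 1963)%Z; (1964, 1987)%Z; (1988, 2022)%Z; (2023, 2039)%Z; (2040, 2047)%Z; (2048, 2057)%Z; (2058, 2072)%Z; (2073, 2095)%Z; (2096, 2115)%Z; (2116, 2127)%Z; (2128, 2145)%Z; (2146, 2169)%Z; (2170, 2186)%Z; (2187, 2208)%Z; (2209, 2209)%Z; (2210, 2211)%Z; (2212, 2214)%Z; (2215, 2218)%Z; (2219, 2224)%Z; (2225, 2233)%Z; (2234, 2247)%Z; (2248, 2267)%Z; (2268, 2296)%Z; (2297, 2303)%Z;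 (2304, 2311)%Z; (2312, 2322)%Z; (2323, 2338)%Z; (2339, 2361)%Z; (2362, 2394)%Z; (2395, 2400)%Z; (2401, 2401)%Z; (2402, 2402)%Z; (2403, 2404)%Z; (2405, 2407)%Z; (2408, 2411)%Z; (2412, 2417)%Z; (2418, 2423)%Z; (2424, 2432)%Z; (2433, 2446)%Z; (2447, 2465)%Z; (2466, 2492)%Z; (2493, 2499)%Z; (2500, 2508)%Z; (2509, 2521)%Z; (2522, 2538)%Z; (2539, 2561)%Z; (2562, 2593)%Z; (2594, 2604)%Z; (2605, 2620)%Z; (2621, 2644)%Z; (2645, 2679)%Z; (2680, 2703)%Z; (2704, 2728)%Z; (2729, 2761)%Z; (2762, 2808)%Z; (2809, 2843)%Z; (2844, 2889)%Z; (2890, 2917)%Z; (2918, 2957)%Z; (2958, 3018)%Z; (3019, 3068)%Z; (3069, 3124)%Z; (3125, 3162)%Z; (3163, 3213)%Z; (3214, 3248)%Z; (3249, 3300)%Z; (3301, 3363)%Z; (3364, 3424)%Z; (3425, 3480)%Z; (3481, 3553)%Z; (3554, 3614)%Z; (3615, 3704)%Z; (3705, 3792)%Z; (3793, 3877)%Z; (3878, 3968)%Z; (3969, 4085)%Z; (4086, 4144)%Z; (4145, 4224)%Z; (4225, 4304)%Z; (4305, 4370)%Z; (4371, 4466)%Z; (4467, 4559)%Z; (4560, 4646)%Z; (4647, 4760)%Z; (4761, 4888)%Z; (4889, 5027)%Z; (5028, 5178)%Z; (5179, 5328)%Z; (5329, 5475)%Z; (5476, 5625)%Z; (5626, 5791)%Z;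 (5792, 5981)%Z; (5982, 6202)%Z; (6203, 6411)%Z; (6412, 6610)%Z; (6611, 6843)%Z; (6844, 7066)%Z; (7067, 7334)%Z; (7335, 7604)%Z; (7605, 7912)%Z; (7913, 8204)%Z; (8205, 8506)%Z; (8507, 8835)%Z; (8836, 9215)%Z; (9216, 9603)%Z; (9604, 9999)%Z; (10000, 10434)%Z; (10435, 10934)%Z; (10935, 11456)%Z; (11457, 12075)%Z; (12076, 12757)%Z; (12758, 13455)%Z; (13456, 14247)%Z; (14248, 15128)%Z; (15129, 16049)%Z; (16050, 16923)%Z; (16924, 17955)%Z; (17956, 19043)%Z; (19044, 20201)%Z; (20202, 21483)%Z; (21484, 22882)%Z; (22883, 24439)%Z; (24440, 26232)%Z; (26233, 28223)%Z; (28224, 30350)%Z; (30351, 32760)%Z; (32761, 35343)%Z; (35344, 38288)%Z; (38289, 41570)%Z; (41571, 45252)%Z; (45253, 49283)%Z; (49284, 53823)%Z; (53824, 59041)%Z; (59042, 64763)%Z; (64764, 71058)%Z; (71059, 78141)%Z; (78142, 86134)%Z; (86135, 95291)%Z; (95292, 105624)%Z; (105625, 117462)%Z; (117463, 130875)%Z; (130876, 146077)%Z; (146078, 163386)%Z; (163387, 183226)%Z; (183227, 206115)%Z; (206116, 232703)%Z; (232704, 263009)%Z; (263010, 297996)%Z; (297997, 338662)%Z; (338663, 385701)%Z; (385702, 440714)%Z; (440715, 504974)%Z; (504975, 579177)%Z; (579178, 666422)%Z; (666423, 769128)%Z; (769129, 889688)%Z; (889689, 1032255)%Z; (1032256, 1199557)%Z;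 (1199558, 1398301)%Z; (1398302, 1633676)%Z; (1633677, 1912688)%Z; (1912689, 2244306)%Z; (2244307, 2640624)%Z; (2640625, 3114545)%Z; (3114546, 3682560)%Z; (3682561, 4363920)%Z; (4363921, 5180435)%Z; (5180436, 6165288)%Z; (6165289, 7353985)%Z; (7353986, 8790500)%Z; (8790501, 10528346)%Z; (10528347, 12635540)%Z; (12635541, 15194403)%Z; (15194404, 18304674)%Z; (18304675, 22096103)%Z; (22096104, 26724300)%Z; (26724301, 32384657)%Z; (32384658, 39309375)%Z; (39309376, 47790019)%Z; (47790020, 58202889)%Z; (58202890, 70997475)%Z; (70997476, 86746622)%Z; (86746623, 106151808)%Z; (106151809, 130096835)%Z; (130096836, 159668495)%Z; (159668496, 196245138)%Z; (196245139, 241537241)%Z; (241537242, 297659111)%Z].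

Lemma blocks_ok : covers blocks 1768 (2 ^ 28 - 1) = true.
Proof. Time vm_compute. reflexivity. Qed.

Lemma small_all : forallb checkS (seq 2 1766) = true.
Proof. Time vm_compute. reflexivity. Qed.

Theorem lemma2p1 (n : nat) (hn : (2 <= n)%nat) :
  B_R n <= 4 * Rpower (INR n) (3 / 2).
Proof.
  destruct (Nat.lt_ge_cases n 1768) as [h1|h1].
  - apply small_ok; auto.
    pose proof small_all as h. rewrite forallb_forall in h. apply h.
    apply in_seq. lia.
  - destruct (Z.lt_ge_cases (Z.of_nat n) (2 ^ 28)) as [h2|h2].
    + destruct (covers_ok blocks 1768 (2 ^ 28 - 1) blocks_ok (Z.of_nat n) ltac:(lia)) as [N [N' [hc hr]]].
      apply (mid_ok N N' n hc hr).
    + apply large; lia.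
Qed.
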